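(* For $k\ge4$, $\Phi_k(2^{k-1}k\log2,\,x)<0$ for all $x\in[\frac12-\frac1{2^k},\frac12]$.
   Context: $\Phi_k(d,x)=-\log(1-x)-d(1-k^{-1}-d^{-1})\log(1-2x^k)+(d-1)\log(1-x^{k-1})$. *)

(* Defs.v *)
From Stdlib Require Import Reals.
Open Scope R_scope.

Definition Phi (k : nat) (d x : R) : R :=
  - ln (1 - x)
  - d * (1 - / INR k - / d) * ln (1 - 2 * x ^ k)
  + (d - 1) * ln (1 - x ^ (k - 1)).

(* Main.v *)
Require Import Defs.
From Stdlib Require Import Reals Lra Lia Psatz.
Open Scope R_scope.

Lemma ln_le_m1 (z : R) : 0 < z -> ln z <= z - 1.
Proof. intro hz. pose proof (exp_ineq1_le (ln z)). rewrite exp_ln in H; lra. Qed.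

Lemma ln_lt_m1 (z : R) : 0 < z -> z <> 1 -> ln z < z - 1.
Proof.
  intros hz h1. assert (ln z <> 0).
  { intro E. apply h1. rewrite <- (exp_ln z hz), E. apply exp_0. }
  pose proof (exp_ineq1 (ln z) H). rewrite exp_ln in H0; lra.
Qed.

Lemma binom2 (n : nat) (e : R) : 0 <= e <= 1 ->
  1 - (1 - e) ^ (S n) - INR (S n) * e * (1 - e) ^ n <= INR (S n) * INR n / 2 * e ^ 2.
Proof.
  intros [h0 h1]. induction n as [|n IH].
  - simpl. lra.
  - assert (Hs : (1 - e) ^ n <= 1).
    { pose proof (pow_incr (1 - e) 1 n ltac:(split; lra)) as Hq. rewrite pow1 in Hq. exact Hq. }
    assert (Hs0 : 0 <= (1 - e) ^ n) by (apply pow_le; lra).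
    assert (E : 1 - (1 - e) ^ S (S n) - INR (S (S n)) * e * (1 - e) ^ S n
      = (1 - (1 - e) ^ S n - INR (S n) * e * (1 - e) ^ n) + INR (S n) * e^2 * (1-e)^n).
    { rewrite !S_INR. simpl. ring. }
    rewrite E. rewrite !S_INR in *.
    assert (INR n >= 0) by (apply Rle_ge, pos_INR).
    assert (Hc : 0 <= (INR n + 1) * e^2) by nra.
    assert (H0 : (INR n + 1) * e^2 * (1-e)^n <= (INR n + 1) * e^2 * 1)
      by (apply Rmult_le_compat_l; lra).
    nra.
Qed.

Lemma pow2_bound (n : nat) : (3 <= n)%nat -> 2 * INR (S n) * INR n <= 3 * 2 ^ n.
Proof.
  intro h. induction h.
  - simpl. lra.
  - rewrite !S_INR in *. simpl.
    assert (3 <= INR m) by (replace 3 with (INR 3) by (simpl; lra); apply le_INR; lia).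
    nra.
Qed.

Theorem lemma3p6 (k : nat) (hk : (4 <= k)%nat) (x : R)
  (hx1 : 1/2 - 1 / 2 ^ k <= x) (hx2 : x <= 1/2) :
  Phi k (2 ^ (k - 1) * INR k * ln 2) x < 0.
Proof.
  destruct k as [|n]; [lia|].
  replace (S n - 1)%nat with n by lia.
  assert (hn : (3 <= n)%nat) by lia.
  set (P := 2 ^ n).
  assert (HP : 8 <= P).
  { unfold P. replace 8 with (2 ^ 3) by (simpl; lra). apply Rle_pow; lra || lia. }
  assert (HB : 2 * INR (S n) * INR n <= 3 * P) by (apply pow2_bound; lia).
  set (L := ln 2).
  assert (HL0 : 0 < L).
  { unfold L. rewrite <- ln_1. apply ln_increasing; lra. }
  assert (HL1 : L <= 1) by (unfold L; pose proof (ln_le_m1 2); lra).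
  set (e := 1 - 2 * x).
  assert (He0 : 0 <= e) by (unfold e; lra).
  assert (He1 : e <= 1 / P).
  { unfold e. replace (2 ^ S n) with (2 * P) in hx1 by (unfold P; simpl; ring).
    assert (1 / (2 * P) = (1/P)/2) by (field; lra). lra. }
  assert (HeP : e * P <= 1).
  { apply (Rmult_le_compat_r P) in He1; [|lra]. replace (1 / P * P) with 1 in He1 by (field; lra). lra. }
  assert (He8 : e <= 1/8) by nra.
  set (s := 1 - e).
  set (p := s ^ n).
  assert (Hp0 : 0 < p) by (unfold p, s; apply pow_lt; nra).
  assert (Hp1 : p <= 1) by (unfold p; pose proof (pow_incr s 1 n ltac:(unfold s; split; lra)) as Hq; rewrite pow1 in Hq; exact Hq).
  set (q := s * p).
  assert (Hxn : x ^ n = p / P).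
  { unfold p, P, s, e. replace (1 - (1 - 2 * x)) with (2 * x) by ring.
    rewrite Rpow_mult_distr. field. apply pow_nonzero; lra. }
  assert (Hxk : 2 * x ^ S n = q / P).
  { simpl. rewrite Hxn. unfold q, s, e. field. lra. }
  set (a := p / P). set (b := q / P).
  assert (Hb0 : 0 < b).
  { unfold b, q, s. apply Rdiv_lt_0_compat; [|lra]. apply Rmult_lt_0_compat; nra. }
  assert (Hab : a - b = p * e / P) by (unfold a, b, q, s; field; lra).
  assert (Ha1 : a <= 1 / 8).
  { unfold a. apply (Rmult_le_reg_r P); [lra|]. replace (p / P * P) with p by (field; lra). lra. }
  assert (Hba : b <= a) by (assert (0 <= p * e / P) by (unfold Rdiv; apply Rmult_le_pos; [nra | apply Rlt_le, Rinv_0_lt_compat; lra]); lra).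
  unfold Phi. replace (S n - 1)%nat with n by lia. rewrite Hxk, Hxn. fold a b.
  set (d := P * INR (S n) * L).
  assert (Hk : INR (S n) > 3) by (rewrite S_INR; replace 3 with (INR 3) by (simpl; lra);
     assert (INR 3 <= INR n) by (apply le_INR; lia); lra).
  assert (HL2 : / 2 < L) by (unfold L; apply ln_lt_2).
  assert (Hd : d >= 8).
  { unfold d. assert (P * INR (S n) >= 24) by nra. nra. }
  replace (d * (1 - / INR (S n) - / d)) with (d - P * L - 1)
    by (unfold d; field; split; nra).
  assert (H1x : 1 - x = (1 + e) / 2) by (unfold e; field).
  rewrite H1x. unfold Rdiv at 1. rewrite ln_mult by lra. rewrite ln_Rinv by lra. fold L.
  assert (HE : e - e ^ 2 <= ln (1 + e)).
  { pose proof (ln_le_m1 (/ (1 + e))). rewrite ln_Rinv in H by lra.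
    assert (/ (1+e) - 1 <= - e + e^2).
    { apply (Rmult_le_reg_r (1 + e)); [lra|].
      replace ((/ (1 + e) - 1) * (1 + e)) with (-e) by (field; lra). nra. }
    assert (0 < / (1+e)) by (apply Rinv_0_lt_compat; lra). lra. }
  assert (HAB : ln (1 - a) - ln (1 - b) <= - (a - b)).
  { assert (ln (1 - a) - ln (1 - b) = ln ((1 - a) / (1 - b))).
    { unfold Rdiv. rewrite ln_mult, ln_Rinv; lra || (try apply Rinv_0_lt_compat; lra). }
    rewrite H. pose proof (ln_le_m1 ((1 - a) / (1 - b))).
    assert (0 < (1 - a) / (1 - b)) by (apply Rdiv_lt_0_compat; lra).
    assert ((1 - a) / (1 - b) - 1 <= - (a - b)).
    { apply (Rmult_le_reg_r (1 - b)); [lra|].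
      replace (((1 - a) / (1 - b) - 1) * (1 - b)) with (-(a-b)) by (field; lra). nra. }
    specialize (H0 H1). lra. }
  assert (HBl : ln (1 - b) < - b) by (pose proof (ln_lt_m1 (1 - b) ltac:(lra) ltac:(intro; lra)); lra).
  assert (He1b : 0 <= e <= 1) by lra.
  pose proof (binom2 n e He1b) as Hbin.
  fold s in Hbin. fold p in Hbin.

  assert (E1 : (d - 1) * (ln (1 - a) - ln (1 - b)) <= - (d - 1) * (a - b)).
  { apply Rmult_le_compat_l with (r := d - 1) in HAB; lra. }
  assert (E2 : P * L * ln (1 - b) < - P * L * b).
  { assert (0 < P * L) by nra. nra. }
  assert (E3 : (d - 1) * (a - b) = INR (S n) * L * p * e - p * e / P).
  { rewrite Hab. unfold d. field. lra. }
  assert (E4 : P * L * b = L * q) by (unfold b; field; lra).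
  assert (E5 : p * e / P <= e / 8).
  { apply (Rmult_le_reg_r P); [lra|]. replace (p * e / P * P) with (p * e) by (field; lra). nra. }
  assert (E6 : e ^ 2 <= e / 8) by nra.
  assert (E7 : INR (S n) * INR n / 2 * e ^ 2 <= 3 / 4 * e).
  { assert (INR (S n) * INR n * e ^ 2 <= INR (S n) * INR n * e * (1 / P)).
    { assert (Hc : 0 <= INR (S n) * INR n * e).
      { pose proof (pos_INR n). pose proof (pos_INR (S n)).
        apply Rmult_le_pos; [apply Rmult_le_pos|]; lra. }
      pose proof (Rmult_le_compat_l _ _ _ Hc He1).
      replace (INR (S n) * INR n * e ^ 2) with (INR (S n) * INR n * e * e) by ring. lra. }
    assert (INR (S n) * INR n * e * (1 / P) <= 3/2 * e).
    { apply (Rmult_le_reg_r P); [lra|].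
      replace (INR (S n) * INR n * e * (1 / P) * P) with (INR (S n) * INR n * e) by (field; lra).
      pose proof (Rmult_le_compat_l _ _ _ He0 HB). lra. }
    lra. }
  assert (E8 : L * (1 - q - INR (S n) * e * p) <= L * (3/4 * e)).
  { apply Rmult_le_compat_l; [lra|]. replace q with (s ^ S n) by (unfold q, p; reflexivity). lra. }
  replace (- (ln (1 + e) + - L) - (d - P * L - 1) * ln (1 - b) + (d - 1) * ln (1 - a))
    with (- ln (1 + e) + L + (d - 1) * (ln (1 - a) - ln (1 - b)) + P * L * ln (1 - b)) by ring.
  nra.
Qed.
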